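(* Let $N_2$ be the set of non-negative integers whose base-3 representation does not use the digit $2$. For each integer $n\ge0$ let $\ell_n^+,\ell_n^-$ be the unique non-negative integers with $\ell_n^+,\ell_n^-,\ell_n^++\ell_n^-\in N_2$ and $n=\ell_n^+-\ell_n^-$, and set $\ell_n=\ell_n^++\ell_n^-$. Let $\alpha,\beta$ be the maps on finite and infinite words over $X_3=\{0,1,2\}$ defined recursively by \[\alpha(0w)=0\alpha(w),\ \alpha(1w)=1\alpha(w),\ \alpha(2w)=1\beta(w),\quad \beta(0w)=1\alpha(w),\ \beta(1w)=1\beta(w),\ \beta(2w)=0\beta(w).\] For $n\ge0$ let $(n)_3=n_0n_1n_2\dots$ be the infinite word of base-3 digits of $n$, least significant first, ending in $0^\infty$. Then for every $n\ge0$ the infinite word $\alpha((n)_3)$ is the infinite word of base-3 digits of $\ell_n$, least significant first; i.e. the sequence $(\ell_n)_{n\ge0}$ is the ternary transducer integer sequence generated by the transducer with states $\alpha,\beta$ started at $\alpha$.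
   Context: The recursion for $\alpha,\beta$ determines their action on infinite words letter by letter. *)

(* Defs.v *)
From mathcomp Require Import all_boot.
Set Implicit Arguments. Unset Strict Implicit. Unset Printing Implicit Defensive.

(* k-th base-3 digit of n (least significant first): (n)_3 = digit3 n 0, digit3 n 1, ... *)
Definition digit3 (n k : nat) : nat := (n %/ 3 ^ k) %% 3.

Definition inN2 (n : nat) : Prop := forall k, digit3 n k <> 2.

Definition word := nat -> nat.

Inductive tstate := St_alpha | St_beta.

(* One transition step: (state, input letter) |-> (output letter, next state), from
   alpha(0w)=0alpha(w), alpha(1w)=1alpha(w), alpha(2w)=1beta(w),
   beta(0w)=1alpha(w),  beta(1w)=1beta(w),  beta(2w)=0beta(w). *)
Definition tstep (s : tstate) (x : nat) : nat * tstate :=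
  match s, x with
  | St_alpha, 0 => (0, St_alpha)
  | St_alpha, 1 => (1, St_alpha)
  | St_alpha, _ => (1, St_beta)
  | St_beta, 0 => (1, St_alpha)
  | St_beta, 1 => (1, St_beta)
  | St_beta, _ => (0, St_beta)
  end.

Fixpoint tstate_at (s : tstate) (w : word) (k : nat) : tstate :=
  match k with
  | 0 => s
  | k'.+1 => (tstep (tstate_at s w k') (w k')).2
  end.

Definition tact (s : tstate) (w : word) : word :=
  fun k => (tstep (tstate_at s w k) (w k)).1.

Definition alpha_map (w : word) : word := tact St_alpha w.

(* Main.v *)
Require Import Defs.
From mathcomp Require Import all_boot zify.
Set Implicit Arguments.

Lemma digit3_0 n : digit3 n 0 = n %% 3.
Proof. by rewrite /digit3 expn0 divn1. Qed.

Lemma digit3_S n k : digit3 n k.+1 = digit3 (n %/ 3) k.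
Proof. by rewrite /digit3 expnS divnMA. Qed.

Lemma inN2_div x : inN2 x -> inN2 (x %/ 3).
Proof. by move=> h k; rewrite -digit3_S; apply: h. Qed.

Lemma inN2_mod x : inN2 x -> x %% 3 <> 2.
Proof. by move=> h; rewrite -digit3_0; apply: h. Qed.

Lemma inN2_build p u : inN2 p -> u < 2 -> inN2 (p * 3 + u).
Proof.
move=> hp hu [|k].
  rewrite digit3_0; lia.
have -> : digit3 (p * 3 + u) k.+1 = digit3 p k.
  rewrite digit3_S; congr digit3; lia.
exact: hp.
Qed.

Lemma tstate_shift k : forall s w,
  tstate_at s w k.+1 = tstate_at (tstep s (w 0)).2 (fun i => w i.+1) k.
Proof.
elim: k => [|k IH] s w //=.
by rewrite -IH.
Qed.

Lemma tstate_ext k s w w' : (forall i, w i = w' i) ->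
  tstate_at s w k = tstate_at s w' k.
Proof. move=> h; elim: k => [|k IH] //=; by rewrite IH h. Qed.

Lemma tact_ext k s w w' : (forall i, w i = w' i) -> tact s w k = tact s w' k.
Proof. move=> h; by rewrite /tact (@tstate_ext k s w w' h) h. Qed.

Lemma tact_shift k s w :
  tact s w k.+1 = tact (tstep s (w 0)).2 (fun i => w i.+1) k.
Proof. by rewrite /tact tstate_shift. Qed.

Definition carry (s : tstate) := if s is St_beta then 1 else 0.

Lemma main_gen k : forall s n lp lm, inN2 lp -> inN2 lm -> inN2 (lp + lm) ->
  n + carry s + lm = lp -> tact s (digit3 n) k = digit3 (lp + lm) k.
Proof.
elim: k => [|k IH] s n lp lm hp hm hs he.
  have h1 := inN2_mod hp; have h2 := inN2_mod hm; have h3 := inN2_mod hs.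
  rewrite /tact /= !digit3_0.
  have : n %% 3 = 0 \/ n %% 3 = 1 \/ n %% 3 = 2 by lia.
  case=> [e|[e|e]]; rewrite e; case: s he => /= he; lia.
have h1 := inN2_mod hp; have h2 := inN2_mod hm; have h3 := inN2_mod hs.
rewrite tact_shift digit3_S.
rewrite (@tact_ext k _ _ (digit3 (n %/ 3))); last by move=> i; rewrite digit3_S.
have -> : (lp + lm) %/ 3 = lp %/ 3 + lm %/ 3 by lia.
apply: IH; try exact: inN2_div.
  have -> : lp %/ 3 + lm %/ 3 = (lp + lm) %/ 3 by lia.
  exact: inN2_div.
rewrite digit3_0.
have : n %% 3 = 0 \/ n %% 3 = 1 \/ n %% 3 = 2 by lia.
case=> [e|[e|e]]; rewrite e; case: s he => /= he; lia.
Qed.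

Lemma ex_gen m : forall n c, n <= m -> c < 2 ->
  exists lp lm, inN2 lp /\ inN2 lm /\ inN2 (lp + lm) /\ n + c + lm = lp.
Proof.
have H0 : inN2 0 by move=> k; rewrite /digit3 div0n mod0n.
have step : forall n c p q, c < 2 -> inN2 p -> inN2 q -> inN2 (p + q) ->
   forall c', n %/ 3 + c' + q = p -> c' <= (n %% 3 + c + 1) %/ 3 <= c' ->
   exists lp lm, inN2 lp /\ inN2 lm /\ inN2 (lp + lm) /\ n + c + lm = lp.
  move=> n c p q hc hp hq hpq c' he hc'.
  have [u [v [hu [hv [huv huv']]]]] : exists u v, u < 2 /\ v < 2 /\ u + v < 2 /\
      n %% 3 + c + v = u + 3 * c'.
    have : n %% 3 + c = 0 \/ n %% 3 + c = 1 \/ n %% 3 + c = 2 \/ n %% 3 + c = 3 by lia.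
    case=> [e|[e|[e|e]]].
    - by exists 0, 0; lia.
    - by exists 1, 0; lia.
    - by exists 0, 1; lia.
    - by exists 0, 0; lia.
  exists (p * 3 + u), (q * 3 + v); split; first exact: inN2_build.
  split; first exact: inN2_build.
  split; last lia.
  have -> : p * 3 + u + (q * 3 + v) = (p + q) * 3 + (u + v) by lia.
  exact: inN2_build.
elim: m => [|m IH] n c hn hc.
  have -> : n = 0 by lia.
  have := step 0 c 0 0 hc H0 H0 H0 0; apply; rewrite ?div0n ?mod0n; lia.
case: (leqP n m) => hnm; first exact: IH.
have [p [q [hp [hq [hpq he]]]]] := IH (n %/ 3) ((n %% 3 + c + 1) %/ 3) ltac:(lia) ltac:(lia).
apply: (step n c p q hc hp hq hpq ((n %% 3 + c + 1) %/ 3)); lia.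
Qed.

Theorem mainTheorem6 (n : nat) :
  (exists lp lm : nat, inN2 lp /\ inN2 lm /\ inN2 (lp + lm) /\ n + lm = lp) /\
  (forall lp lm : nat, inN2 lp -> inN2 lm -> inN2 (lp + lm) -> n + lm = lp ->
     forall k : nat, alpha_map (digit3 n) k = digit3 (lp + lm) k).
Proof.
split.
  have [lp [lm [a [b [c d]]]]] := @ex_gen n n 0 (leqnn n) (isT : 0 < 2).
  by exists lp, lm; rewrite addn0 in d.
move=> lp lm hp hm hs he k.
apply: main_gen => //=; by rewrite addn0.
Qed.
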